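(* Let $k$ be a commutative ring, $P$ an invertible $k$-module, $Q=P^*$, and $A$ a $P$-Frobenius $k$-algebra with Frobenius system $(\psi,x_i,q_i,y_i)$ such that $u=\sum_iq_i\otimes y_ix_i\in Q\otimes_kA$ is Morita-invertible. Then $A$ is strongly separable.
   Context: $A$ is $P$-Frobenius if it is finitely generated projective over $k$ and $A_A\cong\mathrm{Hom}_k(A,P)_A$, where $(\psi a)(x)=\psi(ax)$. A Frobenius system consists of $\psi\in\mathrm{Hom}_k(A,P)$ such that $a\mapsto\psi a$ is an isomorphism $A\to\mathrm{Hom}_k(A,P)$, and finitely many $x_i,y_i\in A$, $q_i\in Q$ with $\sum_ix_i\,q_i(\psi(y_ia))=a$ and $\sum_iq_i(\psi(ax_i))\,y_i=a$ for all $a\in A$. An element $\sum_iq_i\otimes a_i\in Q\otimes A$ is Morita-invertible if there is $\sum_jp_j\otimes b_j\in P\otimes A$ with $\sum_{i,j}q_i(p_j)a_ib_j=1_A$. $A$ is strongly separable (Kanzaki) if there is $e=\sum_jz_j\otimes w_j\in A\otimes A$ with $\sum_jz_jw_j=1_A$ and $\sum_jz_ja\otimes w_j=\sum_jz_j\otimes aw_j$ for all $a\in A$. *)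

(* Defs.v *)
From HB Require Import structures.
From mathcomp Require Import all_boot all_order all_algebra.
Set Implicit Arguments. Unset Strict Implicit. Unset Printing Implicit Defensive.
Import GRing.Theory.
Local Open Scope ring_scope.

Section Defs.
Variable k : comPzRingType.

Definition bilinear_map (M N W : lmodType k) (b : M -> N -> W) : Prop :=
  (forall (c : k) (m m' : M) (n : N), b (c *: m + m') n = c *: b m n + b m' n) /\
  (forall (c : k) (m : M) (n n' : N), b m (c *: n + n') = c *: b m n + b m n').

(* Two finite formal sums  sum_i m_i (x) n_i  and  sum_j m'_j (x) n'_j
   (given by their lists of pairs) denote the same element of M (x)_k N.
   This is the universal property of the tensor product: they are equal iff
   every k-bilinear map out of M x N takes the same value on them. *)
Definition tensor_eq (M N : lmodType k) (s t : seq (M * N)) : Prop :=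
  forall (W : lmodType k) (b : M -> N -> W), bilinear_map b ->
    \sum_(x <- s) b x.1 x.2 = \sum_(x <- t) b x.1 x.2.

Definition fg_projective (M : lmodType k) : Prop :=
  exists (n : nat) (f : {linear M -> 'rV[k]_n}) (g : {linear 'rV[k]_n -> M}),
    forall m, g (f m) = m.

(* P is an invertible k-module: there is a k-module Q with P (x)_k Q ~= k,
   i.e. a bilinear b : P x Q -> k whose induced linear map P (x) Q -> k is
   bijective. *)
Definition invertible_module (P : lmodType k) : Prop :=
  exists (Q : lmodType k) (b : P -> Q -> k^o),
    [/\ bilinear_map b,
        (forall c : k, exists s : seq (P * Q), \sum_(x <- s) b x.1 x.2 = c) &
        (forall s t : seq (P * Q),
            \sum_(x <- s) b x.1 x.2 = \sum_(x <- t) b x.1 x.2 -> tensor_eq s t)].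

Definition ract (A : algType k) (P : lmodType k) (psi : {linear A -> P}) (a : A)
  : A -> P := fun x => psi (a * x).

(* A is P-Frobenius: f.g. projective over k and A_A ~= Hom_k(A,P)_A as right
   A-modules. *)
Definition P_Frobenius (P : lmodType k) (A : algType k) : Prop :=
  fg_projective A /\
  exists f : A -> {linear A -> P},
    [/\ (forall a b x, f (a + b) x = f a x + f b x),
        (forall a b x, f (a * b) x = ract (f a) b x),
        (forall a b, (forall x, f a x = f b x) -> a = b) &
        (forall phi : {linear A -> P}, exists a, forall x, f a x = phi x)].

Definition Frobenius_system (P : lmodType k) (A : algType k)
  (psi : {linear A -> P}) (n : nat)
  (x y : 'I_n -> A) (q : 'I_n -> {linear P -> k^o}) : Prop :=
  [/\ (forall a b, (forall z, ract psi a z = ract psi b z) -> a = b),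
      (forall phi : {linear A -> P}, exists a, forall z, ract psi a z = phi z),
      (forall a : A, \sum_(i < n) ((q i (psi (y i * a)) : k) *: x i) = a) &
      (forall a : A, \sum_(i < n) ((q i (psi (a * x i)) : k) *: y i) = a)].

Definition Morita_invertible (P : lmodType k) (A : algType k) (n : nat)
  (q : 'I_n -> {linear P -> k^o}) (a : 'I_n -> A) : Prop :=
  exists s : seq (P * A),
    \sum_(i < n) \sum_(pb <- s) ((q i pb.1 : k) *: (a i * pb.2)) = 1.

Definition strongly_separable (A : algType k) : Prop :=
  exists e : seq (A * A),
    \sum_(zw <- e) zw.1 * zw.2 = 1 /\
    forall a : A,
      tensor_eq [seq (zw.1 * a, zw.2) | zw <- e] [seq (zw.1, a * zw.2) | zw <- e].

End Defs.

(* Main.v *)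
Require Import Defs.
From HB Require Import structures.
From mathcomp Require Import all_boot all_order all_algebra.
From mathcomp Require Import ring.
Set Implicit Arguments. Unset Strict Implicit. Unset Printing Implicit Defensive.
Import GRing.Theory.
Local Open Scope ring_scope.

Section Bil.
Variables (k : comPzRingType) (M N W : lmodType k) (b : M -> N -> W).
Hypothesis hb : bilinear_map b.

Lemma bil0l n : b 0 n = 0.
Proof.
have H := hb.1 1 0 0 n; rewrite scaler0 addr0 scale1r in H.
by apply: (addrI (b 0 n)); rewrite addr0 -H.
Qed.
Lemma bil0r m : b m 0 = 0.
Proof.
have H := hb.2 1 m 0 0; rewrite scaler0 addr0 scale1r in H.
by apply: (addrI (b m 0)); rewrite addr0 -H.
Qed.
Lemma bilZl c m n : b (c *: m) n = c *: b m n.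
Proof. by have := hb.1 c m 0 n; rewrite addr0 bil0l addr0. Qed.
Lemma bilZr c m n : b m (c *: n) = c *: b m n.
Proof. by have := hb.2 c m n 0; rewrite addr0 bil0r addr0. Qed.
Lemma bilDl m m' n : b (m + m') n = b m n + b m' n.
Proof. by have := hb.1 1 m m' n; rewrite !scale1r. Qed.
Lemma bilDr m n n' : b m (n + n') = b m n + b m n'.
Proof. by have := hb.2 1 m n n'; rewrite !scale1r. Qed.
Lemma bil_suml I (r : seq I) (F : I -> M) n :
  b (\sum_(i <- r) F i) n = \sum_(i <- r) b (F i) n.
Proof. elim: r => [|h r IH]; by rewrite ?big_nil ?bil0l // !big_cons bilDl IH. Qed.
Lemma bil_sumr I (r : seq I) (F : I -> N) m :
  b m (\sum_(i <- r) F i) = \sum_(i <- r) b m (F i).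
Proof. elim: r => [|h r IH]; by rewrite ?big_nil ?bil0r // !big_cons bilDr IH. Qed.
End Bil.

Lemma pow_expand (R : comPzRingType) (a s : R) n :
  exists g, (a + s) ^+ n.+1 = s ^+ n.+1 + (a * s ^+ n) *+ n.+1 + a ^+ 2 * g.
Proof.
elim: n => [|n [g IH]].
  exists 0; rewrite expr1 expr0 mulr1 mulr1n mulr0 addr0 expr1 addrC //.
exists ((s ^+ n) *+ n.+1 + (a + s) * g).
rewrite exprS IH !exprS; ring.
Qed.

Lemma nil_sum (R : comPzRingType) (V : lmodType R) (z : V) I (r : seq I) (f : I -> R) :
  (forall a, f a ^+ 2 *: z = 0) -> (\sum_(a <- r) f a) ^+ (size r).+1 *: z = 0.
Proof.
move=> Hz; elim: r => [|a r IH]; first by rewrite big_nil expr1 scale0r.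
rewrite big_cons [size _]/=.
move: IH; set S := \sum_(j <- r) f j; move: (size r) => m IH.
have [g ->] := pow_expand (f a) S m.+1.
have E1 : S ^+ m.+2 *: z = 0 by rewrite exprS -scalerA IH scaler0.
have E2 : (f a * S ^+ m.+1) *+ m.+2 *: z = 0.
  by rewrite -scalerMnl -scalerA IH scaler0 mul0rn.
have E3 : (f a ^+ 2 * g) *: z = 0 by rewrite mulrC -scalerA Hz scaler0.
by rewrite scalerDl E3 addr0 scalerDl E2 addr0 E1.
Qed.
Lemma inv_sym (k : comPzRingType) (P : lmodType k) : invertible_module P ->
  forall (q q' : {linear P -> k^o}) (p p' : P),
  (q p : k) * (q' p' : k) = (q p' : k) * (q' p : k).
Proof.
move=> [Q' [b [hb surj inj]]].
have [s0 Hs0] := surj 1.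
have Fac : forall (W : lmodType k) (beta : P -> Q' -> W), bilinear_map beta ->
    forall u w, beta u w = (b u w : k) *: \sum_(x <- s0) beta x.1 x.2.
  move=> W beta hbeta u w.
  have H : tensor_eq [:: (u, w)] [seq ((b u w : k) *: x.1, x.2) | x <- s0].
    apply: inj; rewrite big_seq1 big_map /=.
    under eq_bigr do rewrite (bilZl hb).
    by rewrite -scaler_sumr Hs0 /=; exact: (esym (mulr1 (b u w : k))).
  have {}H := H W beta hbeta.
  rewrite big_seq1 big_map /= in H.
  rewrite H scaler_sumr; apply: eq_bigr => x _.
  by rewrite (bilZl hbeta).
pose F (p : P) := \sum_(x <- s0) (b p x.2 : k) *: x.1.
have FF : forall p u w, (b p w : k) *: u = (b u w : k) *: F p.
  move=> p u w.
  apply: (Fac P (fun u w => (b p w : k) *: u)).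
  split.
    by move=> c m m' n; rewrite scalerDr !scalerA mulrC.
  by move=> c m n n'; rewrite (bilDr hb) (bilZr hb) scalerDl -scalerA.
have Fid : forall p, F p = p.
  move=> p; apply/eqP; rewrite eq_sym -subr_eq0; apply/eqP.
  have C1 : forall u w p, (b u w : k) *: (p - F p) = (b u w : k) *: p - (b p w : k) *: u.
    by move=> u w p0; rewrite scalerBr -FF.
  have C2 : forall u w, (b u w : k) ^+ 2 *: (p - F p) = 0.
    move=> u w.
    have E : (b u w : k) *: (p - F p) = - ((b p w : k) *: (u - F u)).
      by rewrite C1 C1 opprB.
    by rewrite expr2 -scalerA E scalerN scalerA mulrC -scalerA C1 subrr scaler0 oppr0.
  have := @nil_sum _ _ (p - F p) _ s0 (fun x => (b x.1 x.2 : k)) (fun x => C2 x.1 x.2).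
  by rewrite Hs0 expr1n scale1r.
have S3 : forall p u w, (b p w : k) *: u = (b u w : k) *: p.
  by move=> p0 u w; rewrite FF Fid.
move=> q q' p p'.
have Ex : forall (r : P), (q' r : k) = \sum_(x <- s0) (b r x.2 : k) * (q' x.1 : k).
  move=> r; rewrite -{1}(Fid r) /F linear_sum; apply: eq_bigr => x _.
  by rewrite linearZ.
rewrite (Ex p') (Ex p) !mulr_sumr; apply: eq_bigr => x _.
rewrite !mulrA; congr (_ * _).
have := congr1 q (S3 p' p x.2); rewrite !linearZ /= => H.
have H' : (b p' x.2 : k) * (q p : k) = (b p x.2 : k) * (q p' : k) := H.
by rewrite mulrC H' mulrC.
Qed.

Theorem proposition6p5 (k : comPzRingType) (P : lmodType k) (A : algType k)
  (psi : {linear A -> P}) (n : nat) (x y : 'I_n -> A)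
  (q : 'I_n -> {linear P -> k^o}) :
  invertible_module P ->
  P_Frobenius P A ->
  Frobenius_system psi x y q ->
  Morita_invertible q (fun i => y i * x i) ->
  strongly_separable A.
Proof.
move=> HP _ [_ _ H3 H4] [s Hs].
have Sym := inv_sym HP.
exists [seq ((q i pb.1 : k) *: y i, x i * pb.2) | i <- index_enum 'I_n, pb <- s].
split.
  rewrite big_allpairs_dep -Hs; apply: eq_bigr => i _; apply: eq_bigr => pb _ /=.
  by rewrite -scalerAl mulrA.
move=> a W beta hbeta.
rewrite !big_map !big_allpairs_dep /=.
have L : forall i pb, beta ((q i pb.1 : k) *: y i * a) (x i * pb.2) =
    \sum_(l < n) ((q i pb.1 : k) * (q l (psi (y i * a * x l)) : k)) *: beta (y l) (x i * pb.2).
  move=> i pb; rewrite -scalerAl (bilZl hbeta) -{1}(H4 (y i * a)) (bil_suml hbeta).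
  rewrite scaler_sumr; apply: eq_bigr => l _.
  by rewrite (bilZl hbeta) scalerA.
have R : forall i pb, beta ((q i pb.1 : k) *: y i) (a * (x i * pb.2)) =
    \sum_(l < n) ((q i pb.1 : k) * (q l (psi (y l * (a * x i))) : k)) *: beta (y i) (x l * pb.2).
  move=> i pb; rewrite (bilZl hbeta) mulrA -{1}(H3 (a * x i)) mulr_suml (bil_sumr hbeta).
  rewrite scaler_sumr; apply: eq_bigr => l _.
  by rewrite -scalerAl (bilZr hbeta) scalerA.
under eq_bigr do under eq_bigr do rewrite L.
under [RHS]eq_bigr do under eq_bigr do rewrite R.
rewrite exchange_big [RHS]exchange_big; apply: eq_bigr => pb _.
rewrite [RHS]exchange_big; apply: eq_bigr => i _; apply: eq_bigr => l _.
congr (_ *: _).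
by rewrite Sym mulrC mulrA.
Qed.
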